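(* Let $f:\mathbb{R}\to(0,+\infty)$ be Lipschitz continuous and continuously differentiable with $f>0$, $f'\le 0$ and $\lim_{x\to+\infty}f(x)=0$. Let $r>0$, $\tau_0\ge 0$, and let $A:(-\infty,r)\to\mathbb{R}$ be continuous with $A(t)=\varphi(t)$ for $t\le 0$, where $\varphi:(-\infty,0]\to\mathbb{R}$ is continuous. Then there exists a unique function $\tau:[0,r)\to[0,+\infty)$ satisfying $$\int_{t-\tau(t)}^{t}f(A(\sigma))\,d\sigma=\int_{-\tau_0}^{0}f(\varphi(\sigma))\,d\sigma\quad\text{for all }t\in[0,r).\tag{I}$$ Moreover, this $\tau$ is continuously differentiable and satisfies $$\tau'(t)=1-\frac{f(A(t))}{f(A(t-\tau(t)))}\quad\text{for all }t\in[0,r),\qquad \tau(0)=\tau_0.\tag{ODE}$$ Conversely, if $\tau:[0,r)\to[0,\infty)$ is a $C^1$ function satisfying (ODE), then it satisfies (I). *)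

(* Defs.v *)
From Stdlib Require Import Reals Lra ClassicalEpsilon.
Open Scope R_scope.

(* Total Riemann integral: RiemannInt of g on [a,b] (oriented, as in Stdlib)
   when g is Riemann integrable there, 0 otherwise.  The value does not
   depend on the chosen integrability proof (RiemannInt_P5). *)
Definition Rint (g : R -> R) (a b : R) : R :=
  match excluded_middle_informative (inhabited (Riemann_integrable g a b)) with
  | left H => RiemannInt (epsilon H (fun _ => True))
  | right _ => 0
  end.

(* l is the derivative of g at x relative to the set D (one-sided at
   endpoints of D). *)
Definition deriv_within (D : R -> Prop) (g : R -> R) (x l : R) : Prop :=
  limit1_in (fun h => (g h - g x) / (h - x)) (fun h => D h /\ h <> x) l x.

Definition cont_within (D : R -> Prop) (g : R -> R) (x : R) : Prop :=
  limit1_in g D (g x) x.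

(* Main.v *)
Require Import Defs.
From Stdlib Require Import Reals Lra ClassicalEpsilon Ranalysis5.
From Coquelicot Require Import Coquelicot.
Open Scope R_scope.

Lemma Rint_RInt h a b : ex_RInt h a b -> Rint h a b = RInt h a b.
Proof.
  intros He. unfold Rint.
  destruct (excluded_middle_informative _) as [i|n].
  - rewrite (RInt_Reals h a b (epsilon i (fun _ => True))). reflexivity.
  - exfalso. apply n. constructor. apply ex_RInt_Reals_0. exact He.
Qed.

Lemma dpl_within D h x l : derivable_pt_lim h x l -> deriv_within D h x l.
Proof.
  intros Hd eps Heps. destruct (Hd eps Heps) as [del Hdel].
  exists del. split; [apply cond_pos|]. intros y [[_ Hyx] Hy].
  unfold R_dist in *. simpl in *. unfold R_dist in Hy.
  assert (Hh : y - x <> 0) by lra.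
  specialize (Hdel (y - x) Hh Hy). replace (x + (y - x)) with y in Hdel by ring.
  exact Hdel.
Qed.

Lemma cpt_within D h x : continuity_pt h x -> cont_within D h x.
Proof.
  intros Hc eps Heps. destruct (Hc eps Heps) as [alp [Ha H]].
  exists alp. split; [exact Ha|]. intros y [Dy Hy].
  destruct (Req_dec y x) as [->|Hne].
  - unfold R_dist. simpl. unfold R_dist. rewrite Rminus_eq_0, Rabs_R0. exact Heps.
  - apply H. split; [split; [exact I| auto] | exact Hy].
Qed.

Lemma within_dpl h x l r : 0 < x < r ->
  deriv_within (fun s => 0 <= s < r) h x l -> derivable_pt_lim h x l.
Proof.
  intros Hx Hd eps Heps. destruct (Hd eps Heps) as [alp [Ha H]].
  assert (Hd0 : 0 < Rmin alp (Rmin x (r - x))).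
  { apply Rmin_pos; [exact Ha| apply Rmin_pos; lra]. }
  exists (mkposreal _ Hd0). intros hh Hh Hhd. simpl in Hhd.
  assert (H1 := Rmin_l alp (Rmin x (r-x))).
  assert (H2 := Rmin_r alp (Rmin x (r-x))).
  assert (H3 := Rmin_l x (r-x)). assert (H4 := Rmin_r x (r-x)).
  apply Rabs_def2 in Hhd.
  assert (Hy := H (x + hh)). unfold R_dist in Hy. simpl in Hy. unfold R_dist in Hy.
  replace (x + hh - x) with hh in Hy by ring. apply Hy.
  split; [split; [lra|lra]|].
  apply Rabs_def1; lra.
Qed.

Lemma deriv_within_cont D h x l : deriv_within D h x l -> cont_within D h x.
Proof.
  intros Hd eps Heps.
  destruct (Hd 1 Rlt_0_1) as [alp [Ha H]].
  assert (Hl : 0 < Rabs l + 1) by (generalize (Rabs_pos l); lra).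
  assert (Hd0 : 0 < Rmin alp (eps / (Rabs l + 1))).
  { apply Rmin_pos; [exact Ha|]. apply Rdiv_lt_0_compat; lra. }
  exists (Rmin alp (eps / (Rabs l + 1))). split; [exact Hd0|].
  intros y [Dy Hy]. unfold R_dist in *. simpl in *. unfold R_dist in *.
  destruct (Req_dec y x) as [->|Hne].
  - rewrite Rminus_eq_0, Rabs_R0. exact Heps.
  - assert (H1 := Rmin_l alp (eps / (Rabs l + 1))).
    assert (H2 := Rmin_r alp (eps / (Rabs l + 1))).
    assert (Hya : R_dist y x < alp) by (unfold R_dist; lra).
    specialize (H y (conj (conj Dy Hne) Hya)).
    simpl in H. unfold R_dist in H.
    assert (Hq : Rabs ((h y - h x) / (y - x)) < Rabs l + 1).
    { assert (T := Rabs_triang_inv ((h y - h x) / (y - x)) l). lra. }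
    assert (Hyx : y - x <> 0) by lra.
    replace (h y - h x) with ((h y - h x) / (y - x) * (y - x)) by (field; exact Hyx).
    rewrite Rabs_mult.
    assert (Hp : 0 < Rabs (y - x)) by (apply Rabs_pos_lt; exact Hyx).
    apply Rle_lt_trans with ((Rabs l + 1) * Rabs (y - x)).
    + apply Rmult_le_compat_r; lra.
    + apply Rlt_le_trans with ((Rabs l + 1) * (eps / (Rabs l + 1))).
      * apply Rmult_lt_compat_l; lra.
      * right. field. lra.
Qed.

Lemma cont_within_comp D h k x : cont_within D h x -> continuity_pt k (h x) ->
  cont_within D (fun s => k (h s)) x.
Proof.
  intros Hh Hk eps Heps. destruct (Hk eps Heps) as [b [Hb Hkb]].
  destruct (Hh b Hb) as [a [Ha Hha]]. exists a. split; [exact Ha|].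
  intros y [Dy Hy].
  destruct (Req_dec (h y) (h x)) as [E|Hne].
  - rewrite E. unfold R_dist. simpl. unfold R_dist. rewrite Rminus_eq_0, Rabs_R0. exact Heps.
  - apply Hkb. split; [split; [exact I| auto]|]. apply Hha. auto.
Qed.
Section Prim.
Variable g : R -> R. Variable r : R.
Hypothesis gc : forall x, x < r -> continuity_pt g x.
Hypothesis gp : forall x, 0 < g x.
Hypothesis Hr : 0 < r.

Lemma gC x : x < r -> continuous g x.
Proof. intros H. apply continuity_pt_filterlim. apply gc, H. Qed.

Lemma exR a b : a < r -> b < r -> ex_RInt g a b.
Proof.
  intros Ha Hb. apply (@ex_RInt_continuous R_CompleteNormedModule). intros z Hz. apply gC.
  assert (Rmax a b < r) by (apply Rmax_lub_lt; auto). lra.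
Qed.

Definition P x := RInt g 0 x.

Lemma P_diff x : x < r -> derivable_pt_lim P x (g x).
Proof.
  intros Hx. apply is_derive_Reals. apply (is_derive_RInt g P 0 x).
  - assert (Hp : 0 < r - x) by lra. exists (mkposreal _ Hp). intros y Hy.
    unfold P. apply (@RInt_correct R_CompleteNormedModule). apply exR; [lra|].
    change (Rabs (y - x) < r - x) in Hy. apply Rabs_def2 in Hy. lra.
  - apply gC, Hx.
Qed.

Lemma P_cont x : x < r -> continuity_pt P x.
Proof. intros Hx. apply derivable_continuous_pt. exists (g x). apply P_diff, Hx. Qed.

Lemma P_ab a b : a < r -> b < r -> RInt g a b = P b - P a.
Proof.
  intros Ha Hb. unfold P. rewrite <- (RInt_Chasles g 0 a b).
  - unfold plus. simpl. assert (E: forall u v : R, v = u + v - u) by (intros; ring). apply E.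
  - apply exR; lra.
  - apply exR; lra.
Qed.

Lemma P_incr a b : a < b -> b < r -> P a < P b.
Proof.
  intros Hab Hb. assert (H : 0 < RInt g a b).
  { apply RInt_gt_0; auto. intros x Hx. apply gC. lra. }
  rewrite P_ab in H; lra.
Qed.

Lemma P_le a b : a < r -> b < r -> P a <= P b -> a <= b.
Proof.
  intros Ha Hb H. destruct (Rle_or_lt a b) as [|Hl]; auto.
  assert (T := P_incr b a Hl Ha). lra.
Qed.

Lemma P_mono a b : a <= b -> b < r -> P a <= P b.
Proof.
  intros H Hb. destruct H as [H|H]; [left; apply P_incr; auto| right; subst; auto].
Qed.

Lemma P_inj a b : a < r -> b < r -> P a = P b -> a = b.
Proof.
  intros Ha Hb H. apply Rle_antisym; apply P_le; auto; lra.
Qed.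

Definition Q y := epsilon (inhabits 0) (fun u => u < r /\ P u = y).

Lemma Q_spec a b y : a < b -> b < r -> P a <= y <= P b ->
  (Q y < r /\ P (Q y) = y) /\ a <= Q y <= b.
Proof.
  intros Hab Hb Hy.
  destruct (f_interv_is_interv P a b y Hab Hy) as [x [Hx Px]].
  { intros z Hz. apply P_cont. lra. }
  assert (Hs : Q y < r /\ P (Q y) = y).
  { unfold Q. apply epsilon_spec. exists x. split; [lra|auto]. }
  split; [exact Hs|].
  assert (E : Q y = x). { apply P_inj; [tauto|lra|]. destruct Hs as [_ ->]. auto. }
  rewrite E. exact Hx.
Qed.

Lemma Q_P a : a < r -> Q (P a) = a.
Proof.
  intros Ha. assert (Hs : Q (P a) < r /\ P (Q (P a)) = P a).
  { unfold Q. apply epsilon_spec. exists a. split; auto. }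
  apply P_inj; tauto.
Qed.

Lemma Q_deriv y0 a b : a < b -> b < r -> P a < y0 < P b ->
  derivable_pt_lim Q y0 (1 / g (Q y0)).
Proof.
  intros Hab Hb Hy.
  assert (Qc : continuity_pt Q y0).
  { apply (continuity_pt_recip_interv P Q a b Hab).
    - intros x y Hx Hxy Hy'. apply P_incr; lra.
    - intros x Hx1 Hx2. unfold comp, id. apply (Q_spec a b x); auto.
    - intros x Hx1 Hx2. apply (Q_spec a b x); auto.
    - intros z Hz. apply P_cont; lra.
    - exact Hy. }
  assert (QPa : Q (P a) = a) by (apply Q_P; lra).
  assert (QPb : Q (P b) = b) by (apply Q_P; lra).
  assert (Prf : forall z, Q (P a) <= z <= Q (P b) -> derivable_pt P z).
  { intros z Hz. rewrite QPa, QPb in Hz. exists (g z). apply P_diff. lra. }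
  assert (Prg : Q (P a) <= Q y0 <= Q (P b)).
  { rewrite QPa, QPb. apply (Q_spec a b y0); auto; lra. }
  assert (Hd : derive_pt P (Q y0) (Prf (Q y0) Prg) = g (Q y0)).
  { apply derive_pt_eq_0. apply P_diff. apply (Q_spec a b y0); auto; lra. }
  assert (Hab' : P a < P b) by lra.
  assert (T := derivable_pt_lim_recip_interv P Q (P a) (P b) y0 Prf Qc Hab' Hy Prg).
  rewrite Hd in T. apply T.
  - intros x Hx. unfold comp, id. apply (Q_spec a b x); auto.
  - specialize (gp (Q y0)). lra.
Qed.
End Prim.
Theorem lemma2p1 (f : R -> R) (r tau0 : R) (A phi : R -> R)
  (Hfpos : forall x, 0 < f x)
  (Hflip : exists L, forall x y, Rabs (f x - f y) <= L * Rabs (x - y))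
  (Hfc1 : exists f' : R -> R,
      (forall x, derivable_pt_lim f x (f' x)) /\ continuity f' /\
      (forall x, f' x <= 0))
  (Hflim : forall eps, 0 < eps -> exists M, forall x, M <= x -> Rabs (f x) < eps)
  (Hr : 0 < r) (Htau0 : 0 <= tau0)
  (HA : forall t, t < r -> continuity_pt A t)
  (Hphi : forall t, t <= 0 -> cont_within (fun s => s <= 0) phi t)
  (HAphi : forall t, t <= 0 -> A t = phi t) :
  (* existence and uniqueness of a solution of (I), which is C^1 and solves (ODE) *)
  (exists tau : R -> R,
     (forall t, 0 <= t < r ->
        0 <= tau t /\
        Rint (fun s => f (A s)) (t - tau t) t = Rint (fun s => f (phi s)) (- tau0) 0)
     /\ (forall tau' : R -> R,
           (forall t, 0 <= t < r ->
              0 <= tau' t /\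
              Rint (fun s => f (A s)) (t - tau' t) t = Rint (fun s => f (phi s)) (- tau0) 0) ->
           forall t, 0 <= t < r -> tau' t = tau t)
     /\ (exists dtau : R -> R,
           (forall t, 0 <= t < r ->
              deriv_within (fun s => 0 <= s < r) tau t (dtau t) /\
              cont_within (fun s => 0 <= s < r) dtau t /\
              dtau t = 1 - f (A t) / f (A (t - tau t))))
     /\ tau 0 = tau0)
  /\
  (* converse: a C^1 nonnegative solution of (ODE) solves (I) *)
  (forall tau : R -> R,
     (forall t, 0 <= t < r -> 0 <= tau t) ->
     (exists dtau : R -> R,
        forall t, 0 <= t < r ->
          deriv_within (fun s => 0 <= s < r) tau t (dtau t) /\
          cont_within (fun s => 0 <= s < r) dtau t /\
          dtau t = 1 - f (A t) / f (A (t - tau t))) ->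
     tau 0 = tau0 ->
     forall t, 0 <= t < r ->
       Rint (fun s => f (A s)) (t - tau t) t = Rint (fun s => f (phi s)) (- tau0) 0).
Proof.
  destruct Hfc1 as [f' [Hfd _]].
  set (g := fun s => f (A s)).
  assert (gc : forall x, x < r -> continuity_pt g x).
  { intros x Hx. change (continuity_pt (comp f A) x).
    apply continuity_pt_comp; [apply HA, Hx|].
    apply derivable_continuous_pt. exists (f' (A x)). apply Hfd. }
  assert (gp : forall x, 0 < g x) by (intros; apply Hfpos).
  assert (HRA : forall a b, a < r -> b < r -> Rint (fun s => f (A s)) a b = P g b - P g a).
  { intros a b Ha Hb. rewrite Rint_RInt by (apply (exR g r gc); auto).
    apply (P_ab g r gc Hr); auto. }
  set (C := RInt g (-tau0) 0).
  assert (Hphi_eq : Rint (fun s => f (phi s)) (-tau0) 0 = C).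
  { assert (Heq : forall x, Rmin (-tau0) 0 < x < Rmax (-tau0) 0 -> g x = f (phi x)).
    { intros x Hx. rewrite Rmax_right in Hx by lra. unfold g. rewrite HAphi; auto; lra. }
    rewrite Rint_RInt.
    - unfold C. symmetry. apply RInt_ext. exact Heq.
    - apply (ex_RInt_ext g). exact Heq. apply (exR g r gc); lra. }
  assert (HC : 0 <= C).
  { apply RInt_ge_0; [lra| apply (exR g r gc); lra | intros; left; apply gp]. }
  assert (P0 : P g 0 = 0) by (unfold P; apply (@RInt_point R_CompleteNormedModule)).
  assert (Pt0 : P g (-tau0) = - C).
  { assert (T := P_ab g r gc Hr (-tau0) 0 ltac:(lra) Hr). fold C in T. lra. }
  set (u := fun t => Q g r (P g t - C)).
  assert (Hu : forall t, 0 <= t < r ->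
     (u t < r /\ P g (u t) = P g t - C) /\ (-tau0 - 1) <= u t <= (t + r) / 2).
  { intros t Ht. apply (Q_spec g r gc gp Hr); [lra|lra|].
    assert (T1 := P_mono g r gc gp Hr (-tau0 - 1) (-tau0) ltac:(lra) ltac:(lra)).
    assert (T2 := P_mono g r gc gp Hr 0 t ltac:(lra) ltac:(lra)).
    assert (T3 := P_mono g r gc gp Hr t ((t + r) / 2) ltac:(lra) ltac:(lra)).
    lra. }
  assert (Hut : forall t, 0 <= t < r -> u t <= t).
  { intros t Ht. destruct (Hu t Ht) as [[H1 H2] _].
    apply (P_le g r gc gp Hr); [lra|lra|]. lra. }
  assert (Hud : forall t, 0 <= t < r -> derivable_pt_lim u t (1 / g (u t) * g t)).
  { intros t Ht.
    assert (D1 : derivable_pt_lim (fun s => P g s - C) t (g t)).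
    { replace (g t) with (g t - 0) by ring.
      apply (derivable_pt_lim_minus (P g) (fun _ => C)).
      - apply (P_diff g r gc Hr). lra.
      - apply derivable_pt_lim_const. }
    change (derivable_pt_lim (comp (Q g r) (fun s => P g s - C)) t (1 / g (u t) * g t)).
    apply derivable_pt_lim_comp; [exact D1|].
    apply (Q_deriv g r gc gp Hr _ (-tau0 - 1) ((t + r) / 2)); [lra|lra|].
    assert (T1 := P_incr g r gc gp Hr (-tau0 - 1) (-tau0) ltac:(lra) ltac:(lra)).
    assert (T2 := P_mono g r gc gp Hr 0 t ltac:(lra) ltac:(lra)).
    assert (T3 := P_incr g r gc gp Hr t ((t + r) / 2) ltac:(lra) ltac:(lra)).
    lra. }
  split.
  - exists (fun t => t - u t). split; [|split; [|split]].
    + intros t Ht. split; [specialize (Hut t Ht); lra|].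
      rewrite Hphi_eq. replace (t - (t - u t)) with (u t) by ring.
      destruct (Hu t Ht) as [[H1 H2] _].
      rewrite HRA by lra. lra.
    + intros tau' H' t Ht. destruct (H' t Ht) as [H0 HI].
      rewrite Hphi_eq, HRA in HI by lra.
      destruct (Hu t Ht) as [[H1 H2] _].
      assert (E : t - tau' t = u t).
      { apply (P_inj g r gc gp Hr); lra. }
      lra.
    + exists (fun t => 1 - g t / g (u t)). intros t Ht. split; [|split].
      * apply dpl_within.
        replace (1 - g t / g (u t)) with (1 - 1 / g (u t) * g t)
          by (field; specialize (gp (u t)); lra).
        apply (derivable_pt_lim_minus (fun s => s) u).
        -- apply derivable_pt_lim_id.
        -- apply Hud, Ht.
      * apply cpt_within.
        destruct (Hu t Ht) as [[H1 H2] _].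
        apply (continuity_pt_minus (fun _ => 1) (fun s => g s / g (u s))).
        -- apply continuity_pt_const. intros a b; reflexivity.
        -- apply (continuity_pt_div g (fun s => g (u s))).
           ++ apply gc; lra.
           ++ change (continuity_pt (comp g u) t). apply continuity_pt_comp.
              ** apply derivable_continuous_pt. exists (1 / g (u t) * g t). apply Hud, Ht.
              ** apply gc, H1.
           ++ specialize (gp (u t)). lra.
      * replace (t - (t - u t)) with (u t) by ring. reflexivity.
    + assert (Ht : 0 <= 0 < r) by lra.
      destruct (Hu 0 Ht) as [[H1 H2] _].
      assert (E : u 0 = - tau0).
      { apply (P_inj g r gc gp Hr); lra. }
      lra.
  - intros tau Htp [dtau Hd] Ht0 t Ht.
    specialize (Htp t Ht) as Htpt.
    rewrite Hphi_eq, HRA by lra.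
    set (G := fun s => P g s - P g (s - tau s)).
    assert (G0 : G 0 = C).
    { unfold G. rewrite Ht0. replace (0 - tau0) with (- tau0) by ring. lra. }
    assert (HG : forall x, 0 < x < r -> derivable_pt_lim G x 0).
    { intros x Hx. assert (Hx' : 0 <= x < r) by lra.
      destruct (Hd x Hx') as [Hdx [_ Hode]].
      assert (Hpx := Htp x Hx').
      assert (D1 : derivable_pt_lim tau x (dtau x)) by (apply (within_dpl tau x _ r); auto).
      assert (D2 : derivable_pt_lim (fun s => s - tau s) x (1 - dtau x)).
      { apply (derivable_pt_lim_minus (fun s => s) tau); [apply derivable_pt_lim_id| exact D1]. }
      assert (D3 : derivable_pt_lim (fun s => P g (s - tau s)) x (g (x - tau x) * (1 - dtau x))).
      { change (derivable_pt_lim (comp (P g) (fun s => s - tau s)) x (g (x - tau x) * (1 - dtau x))).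
        apply derivable_pt_lim_comp; [exact D2|]. apply (P_diff g r gc Hr). lra. }
      replace 0 with (g x - g (x - tau x) * (1 - dtau x)).
      - apply (derivable_pt_lim_minus (P g) (fun s => P g (s - tau s))); [|exact D3].
        apply (P_diff g r gc Hr). lra.
      - rewrite Hode. fold (g x) (g (x - tau x)). field. specialize (gp (x - tau x)). lra. }
    assert (HGc : cont_within (fun s => 0 <= s < r) G 0).
    { unfold cont_within, G. apply limit_minus.
      - apply cpt_within. apply (P_cont g r gc Hr). lra.
      - apply (cont_within_comp _ (fun s => s - tau s) (P g)).
        + unfold cont_within. apply limit_minus.
          * apply cpt_within. apply derivable_continuous_pt. exists 1. apply derivable_pt_lim_id.
          * destruct (Hd 0 ltac:(lra)) as [Hd0 _]. apply (deriv_within_cont _ _ _ _ Hd0).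
        + apply (P_cont g r gc Hr). assert (Htp0 := Htp 0 ltac:(lra)). lra. }
    change (G t = C). rewrite <- G0.
    destruct (Req_dec t 0) as [E|Hne]; [rewrite E; reflexivity|].
    assert (Hcst : forall e, 0 < e < t -> G e = G t).
    { intros e He.
      assert (pr : forall x, e < x < t -> derivable_pt G x).
      { intros x Hx. exists 0. apply HG. lra. }
      assert (T := null_derivative_loc G e t pr).
      symmetry. apply T.
      - intros x Hx. apply derivable_continuous_pt. exists 0. apply HG. lra.
      - intros x Hx. apply derive_pt_eq_0. apply HG. lra.
      - lra. }
    destruct (Req_dec (G t) (G 0)) as [|Hneq]; [assumption|exfalso].
    assert (Heps : 0 < Rabs (G t - G 0)) by (apply Rabs_pos_lt; lra).
    destruct (HGc _ Heps) as [alp [Ha Halp]].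
    set (e := Rmin alp t / 2).
    assert (Htpos : 0 < t) by (destruct Ht as [[Hlt|Heq] _]; [exact Hlt| exfalso; apply Hne; auto]).
    assert (He1 : 0 < e) by (unfold e; assert (0 < Rmin alp t) by (apply Rmin_pos; lra); lra).
    assert (He2 : e < t) by (unfold e; generalize (Rmin_r alp t); lra).
    assert (He3 : e < alp) by (unfold e; generalize (Rmin_l alp t); lra).
    assert (T := Halp e).
    rewrite Hcst in T by lra.
    unfold R_dist in T. simpl in T. unfold R_dist in T.
    assert (T' : Rabs (G t - G 0) < Rabs (G t - G 0)).
    { apply T. split; [lra|]. rewrite Rminus_0_r, Rabs_pos_eq; lra. }
    lra.
Qed.
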